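(* Fix a prime power $q$ and real numbers $0\le\rho'\le r'\le 1/2$ with $r'>0$. Define $$k_{\mathrm{C}}(r',\rho') = \liminf_{n\to\infty}\frac{\log_q K_{\mathrm{C}}(q,n,\lfloor r'n\rfloor,\lfloor\rho'n\rfloor)}{\log_q{n\brack \lfloor r'n\rfloor}}.$$ Then $k_{\mathrm{C}}(r',\rho') = 1 - \frac{\rho'(1-\rho')}{r'(1-r')}$.
   Context: ${m\brack k}=\prod_{i=0}^{k-1}\frac{q^m-q^i}{q^k-q^i}$ is the Gaussian binomial. $E_r(q,n)$ is the set of $r$-dimensional subspaces of $\mathrm{GF}(q)^n$ with injection distance $d_{\mathrm{I}}(U,V)=\dim(U+V)-\min\{\dim U,\dim V\}$; the covering radius of a nonempty $\mathcal{C}\subseteq E_r(q,n)$ is $\max_U\min_{C\in\mathcal{C}}d_{\mathrm{I}}(U,C)$, and $K_{\mathrm{C}}(q,n,r,\rho)$ is the minimum cardinality of a subset of $E_r(q,n)$ with covering radius at most $\rho$. *)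

(* Defs.v *)
From HB Require Import structures.
From mathcomp Require Import all_boot all_order all_algebra all_field.
From mathcomp Require Import all_classical all_reals all_analysis.
Set Implicit Arguments. Unset Strict Implicit. Unset Printing Implicit Defensive.
Import Order.TTheory GRing.Theory Num.Theory.

(* Subspaces of GF(q)^n, with GF(q) any finite field F (q = #|F|). *)
Definition subsp (F : finFieldType) (n : nat) := {vspace 'rV[F]_n}.
HB.instance Definition _ (F : finFieldType) n := SubChoice.on (subsp F n).
HB.instance Definition _ (F : finFieldType) n := [Finite of subsp F n by <:].

Definition injdist (F : finFieldType) (n : nat) (U V : subsp F n) : nat :=
  (\dim (U + V)%VS - minn (\dim U) (\dim V))%N.

Definition Er (F : finFieldType) (n r : nat) : {set subsp F n} :=
  [set U : subsp F n | \dim U == r].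

Definition covering_code (F : finFieldType) (n r rho : nat)
    (C : {set subsp F n}) : bool :=
  [&& C \subset @Er F n r, (0 < #|C|)%N &
      [forall U in @Er F n r, exists X in C, injdist U X <= rho]].

(* K_C(q,n,r,rho) : minimum cardinality of such a code.  The seed value
   #|E_r| is itself attained (E_r is a code with covering radius 0), so this is
   exactly the minimum. *)
Definition K_C (F : finFieldType) (n r rho : nat) : nat :=
  \big[minn/#|@Er F n r|]_(C : {set subsp F n} | @covering_code F n r rho C) #|C|.

Local Open Scope ring_scope.

Definition gauss_binom (R : realType) (q : R) (m k : nat) : R :=
  \prod_(i < k) ((q ^+ m - q ^+ i) / (q ^+ k - q ^+ i)).

Definition logq (R : realType) (q x : R) : R := ln x / ln q.

Definition kC_seq (R : realType) (F : finFieldType) (r' rho' : R) (n : nat) : R :=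
  let q : R := (#|F|)%:R in
  let r := Num.truncn (r' * n%:R) in
  let rho := Num.truncn (rho' * n%:R) in
  logq q (@K_C F n r rho)%:R / logq q (gauss_binom q n r).

Definition kC (R : realType) (F : finFieldType) (r' rho' : R) : \bar R :=
  limn_einf (fun n => (@kC_seq R F r' rho' n)%:E).

(* Main.v *)
Require Import Defs.
From HB Require Import structures.
From mathcomp Require Import all_boot all_order all_algebra all_field.
From mathcomp Require Import zify.
Set Implicit Arguments. Unset Strict Implicit. Unset Printing Implicit Defensive.
Import Order.TTheory GRing.Theory Num.Theory.
Lemma card_pairs (A B : finType) (R : A -> B -> bool) :
  #|[set p : A * B | R p.1 p.2]| = \sum_(a : A) #|[set b | R a b]|.
Proof.
rewrite -(sum1dep_card (fun p => R p.1 p.2)).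
rewrite (eq_bigr (fun a => \sum_(b | R a b) 1)); last by move=> a _; rewrite sum1dep_card.
by rewrite pair_big_dep.
Qed.
Lemma card_cons (T : finType) (k : nat) (P : k.+1.-tuple T -> bool) :
  #|[set t | P t]| = \sum_(t : k.-tuple T) #|[set x | P (cons_tuple x t)]|.
Proof.
rewrite -(card_pairs (fun t x => P (cons_tuple x t))).
pose f (p : k.-tuple T * T) := cons_tuple p.2 p.1.
have injf : injective f.
  move=> [a b] [c d]; rewrite /f /= => /(congr1 val) /= [-> /val_inj ->]. done.
rewrite -(card_imset _ injf); apply: eq_card => t.
rewrite inE; apply/idP/imsetP.
  move=> Pt; exists (behead_tuple t, thead t); last first.
    by rewrite /f /=; apply: val_inj; case: t Pt => [[|x s] //= _].
  rewrite inE /= /f.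
  have -> : cons_tuple (thead t) (behead_tuple t) = t.
    by apply: val_inj; case: t Pt => [[|x s] //= _].
  done.
by case=> [[a b]]; rewrite inE /f /= => ? ->.
Qed.
Import Order.TTheory GRing.Theory Num.Theory.
Section VS.
Variables (F : finFieldType) (n : nat).
Local Notation T := 'rV[F]_n.
Local Notation q := #|F|.

Lemma q_gt1 : (1 < q)%N.
Proof. exact: finNzRing_gt1. Qed.

Lemma card_vs (X : {vspace T}) : #|[set x | x \in X]| = (q ^ \dim X)%N.
Proof. by rewrite -card_vspace; apply: eq_card => x; rewrite inE. Qed.

Lemma card_notin (X W : {vspace T}) : (\dim W < \dim X)%N ->
  (q ^ (\dim X).-1 <= #|[set x | (x \in X) && (x \notin W)]|)%N.
Proof.
move=> hd.
have := cardsID [set x | x \in W] [set x | x \in X].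
have -> : [set x | x \in X] :&: [set x | x \in W] = [set x | x \in (X :&: W)%VS].
  by apply/setP => x; rewrite !inE memv_cap.
have -> : [set x | x \in X] :\: [set x | x \in W] = [set x | (x \in X) && (x \notin W)].
  by apply/setP => x; rewrite !inE andbC.
rewrite !card_vs => e.
have h1 : (\dim (X :&: W) <= (\dim X).-1)%N.
  rewrite -ltnS prednK; last by case: (\dim X) hd.
  exact: leq_ltn_trans (dimvS (capvSr X W)) hd.
have h2 := leq_pexp2l (ltnW q_gt1) h1.
have h3 : (q ^ \dim X = q * q ^ (\dim X).-1)%N.
  by rewrite -expnS prednK //; case: (\dim X) hd.
have q2 := q_gt1.
have h4 : (2 * q ^ (\dim X).-1 <= q ^ \dim X)%N by rewrite h3 leq_mul2r q2 orbT.
lia.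
Qed.


Lemma sum_if (A : finType) (P : pred A) c :
  (\sum_(a : A) (if P a then c else 0) = #|[set a | P a]| * c)%N.
Proof.
rewrite -big_mkcond /= -sum_nat_const; apply: eq_bigl => a; by rewrite inE.
Qed.

Lemma card_allX (X : {vspace T}) k :
  #|[set t : k.-tuple T | all (fun x => x \in X) t]| = (q ^ (k * \dim X))%N.
Proof.
elim: k => [|k IH].
  rewrite mul0n expn0.
  have -> : [set t : 0.-tuple T | all (fun x => x \in X) t] = setT.
    by apply/setP => t; rewrite !inE tuple0.
  by rewrite cardsT card_tuple.
rewrite card_cons.
rewrite (eq_bigr (fun t : k.-tuple T => if all (fun x => x \in X) t then q ^ \dim X else 0)%N).
  by rewrite sum_if IH mulSn addnC expnD.
move=> t _ /=; case: ifP => ht.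
  by rewrite -card_vs; apply: eq_card => x; rewrite !inE /= andbT.
by apply/eqP; rewrite -leqn0 leqNgt card_gt0; apply/set0Pn => -[x]; rewrite !inE /= andbF.
Qed.

Lemma lb_free (X : {vspace T}) (s : seq T) k : free s -> (k + size s <= \dim X)%N ->
  (q ^ (k * (\dim X).-1) <=
    #|[set t : k.-tuple T | all (fun x => x \in X) t && free (t ++ s)]|)%N.
Proof.
move=> fs; elim: k => [|k IH] hk.
  rewrite mul0n expn0 card_gt0; apply/set0Pn; exists [tuple]; by rewrite inE /=.
rewrite card_cons.
have ->: ((k.+1) * (\dim X).-1 = k * (\dim X).-1 + (\dim X).-1)%N by rewrite mulSn addnC.
rewrite expnD.
apply: (@leq_trans (\sum_(t : k.-tuple T)
   (if all (fun x => x \in X) t && free (t ++ s) then q ^ (\dim X).-1 else 0))%N).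
  by rewrite sum_if leq_mul2r IH ?orbT //; apply: leq_trans hk; rewrite addSn.
apply: leq_sum => t _; case: ifP => // /andP [ht hf].
apply: leq_trans (card_notin (W := <<t ++ s>>%VS) _) _.
  apply: leq_ltn_trans (dim_span _) _; rewrite size_cat size_tuple.
  by apply: leq_trans hk; rewrite addSn.
apply: subset_leq_card; apply/subsetP => x; rewrite !inE /= => /andP [hx hn].
by rewrite hx ht /= free_cons hn hf.
Qed.


Lemma fiber_sum (D : finType) (A : {set D}) (S : {set subsp F n}) (phi : D -> subsp F n) :
  (forall a, a \in A -> phi a \in S) ->
  #|A| = (\sum_(V in S) #|[set a in A | phi a == V]|)%N.
Proof.
move=> hA; rewrite -sum1_card (partition_big phi (fun V => V \in S)) //=.
by apply: eq_bigr => V _; rewrite -sum1dep_card.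
Qed.

Lemma fiber_lb (D : finType) (A : {set D}) (S : {set subsp F n}) (phi : D -> subsp F n) m :
  (forall a, a \in A -> phi a \in S) ->
  (forall V, V \in S -> m <= #|[set a in A | phi a == V]|)%N ->
  (#|S| * m <= #|A|)%N.
Proof.
move=> hA hm; rewrite (fiber_sum hA) -sum_nat_const; exact: leq_sum.
Qed.

Lemma fiber_ub (D : finType) (A : {set D}) (S : {set subsp F n}) (phi : D -> subsp F n) M :
  (forall a, a \in A -> phi a \in S) ->
  (forall V, V \in S -> #|[set a in A | phi a == V]| <= M)%N ->
  (#|A| <= #|S| * M)%N.
Proof.
move=> hA hm; rewrite (fiber_sum hA) -sum_nat_const; exact: leq_sum.
Qed.

Lemma dim_free (s : seq T) : free s -> \dim <<s>> = size s.
Proof. by move/eqP. Qed.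

Lemma span_all (s : seq T) (V : {vspace T}) : all (fun x => x \in V) s -> (<<s>> <= V)%VS.
Proof. by move/allP => h; apply/span_subvP => x /h. Qed.

Lemma span_eqV (s : seq T) (V : {vspace T}) : all (fun x => x \in V) s -> free s ->
  size s = \dim V -> <<s>>%VS = V.
Proof.
move=> ha hf hs; apply/eqP; by rewrite eqEdim span_all //= dim_free // hs.
Qed.

Lemma dimT : \dim (fullv : {vspace T}) = n.
Proof. by rewrite dimvf /dim /= mul1n. Qed.

Lemma card_T : #|T| = (q ^ n)%N.
Proof. by rewrite card_mx mul1n. Qed.

Lemma Er_lb r : (r <= n)%N -> (q ^ (r * n.-1) <= #|Er F n r| * q ^ (r * r))%N.
Proof.
move=> hr.
pose A := [set t : r.-tuple T | all (fun x => x \in (fullv : {vspace T})) t && free (t ++ [::])].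
have h1 : (q ^ (r * n.-1) <= #|A|)%N.
  by have := @lb_free fullv [::] r (nil_free _); rewrite dimT addn0 => /(_ hr).
apply: leq_trans h1 _.
apply: (@fiber_ub _ A (Er F n r) (fun t => <<t>>%VS)).
  move=> t; rewrite !inE cats0 => /andP [_ hf]; by rewrite dim_free // size_tuple.
move=> V; rewrite inE => /eqP hV.
rewrite [X in q ^ X](_ : _ = (r * \dim V)%N); last by rewrite hV.
rewrite -card_allX; apply: subset_leq_card; apply/subsetP => t.
rewrite !inE => /andP [_ /eqP <-]; apply/allP => x hx; exact: memv_span.
Qed.

Lemma Er_ub r : (#|Er F n r| * q ^ (r * r.-1) <= q ^ (n * r))%N.
Proof.
pose A := [set t : r.-tuple T | free t].
have h1 : (#|A| <= q ^ (n * r))%N.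
  by apply: leq_trans (max_card _) _; rewrite card_tuple card_T -expnM.
apply: leq_trans h1.
apply: (@fiber_lb _ A (Er F n r) (fun t => <<t>>%VS)).
  move=> t; rewrite !inE => hf; by rewrite dim_free // size_tuple.
move=> V; rewrite inE => /eqP hV.
have := @lb_free V [::] r (nil_free _); rewrite addn0 hV leqnn => /(_ isT) h.
apply: leq_trans h _; apply: subset_leq_card; apply/subsetP => t.
rewrite !inE cats0 => /andP [ha hf]; rewrite hf /=.
by rewrite (span_eqV ha hf) // size_tuple hV.
Qed.


Lemma card_prod (A B : finType) (P : pred A) (Q : pred B) :
  #|[set p : A * B | P p.1 && Q p.2]| = (#|[set a | P a]| * #|[set b | Q b]|)%N.
Proof.
rewrite (card_pairs (fun a b => P a && Q b)) -sum_if; apply: eq_bigr => a _; case: (P a) => /=.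
  by apply: eq_card => b; rewrite !inE.
by apply/eqP; rewrite -leqn0 leqNgt card_gt0; apply/set0Pn => -[b]; rewrite !inE.
Qed.

Lemma card_pairs_lb (A B : finType) (P : pred A) (R : A -> B -> bool) m :
  (forall a, P a -> m <= #|[set b | R a b]|)%N ->
  (#|[set a | P a]| * m <= #|[set p : A * B | P p.1 && R p.1 p.2]|)%N.
Proof.
move=> h; rewrite (card_pairs (fun a b => P a && R a b)) -sum_if; apply: leq_sum => a _.
case: ifP => // Pa; apply: leq_trans (h a Pa) _.
by apply: subset_leq_card; apply/subsetP => b; rewrite !inE /=.
Qed.

Definition ball r rho (U : subsp F n) := [set V in Er F n r | injdist U V <= rho]%N.

Lemma injdist_eq r (U V : subsp F n) : \dim U = r -> \dim V = r ->
  injdist U V = (\dim (U + V) - r)%N.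
Proof. by move=> hU hV; rewrite /injdist hU hV minnn. Qed.

Lemma ball_ub r rho (U : subsp F n) : U \in Er F n r -> (rho <= r)%N ->
  (#|ball r rho U| * q ^ ((r - rho) * (r - rho).-1 + rho * r.-1)
     <= q ^ ((r - rho) * r + rho * n))%N.
Proof.
rewrite inE => /eqP hU hrr.
pose A := [set p : (r - rho).-tuple T * rho.-tuple T |
             all (fun x => x \in U) p.1 && free (p.2 ++ p.1)].
have h1 : (#|A| <= q ^ ((r - rho) * r + rho * n))%N.
  apply: (@leq_trans #|[set p : (r - rho).-tuple T * rho.-tuple T |
             all (fun x => x \in U) p.1 && all (fun x => x \in (fullv : {vspace T})) p.2]|).
    apply: subset_leq_card; apply/subsetP => p; rewrite !inE => /andP [-> _] /=.
    by apply/allP => x _; rewrite memvf.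
  by rewrite (card_prod (fun t : (r - rho).-tuple T => all (fun x => x \in U) t) (fun t : rho.-tuple T => all (fun x => x \in (fullv : {vspace T})) t)) !card_allX hU dimT expnD.
apply: leq_trans h1.
apply: (@fiber_lb _ A (ball r rho U) (fun p => <<p.2 ++ p.1>>%VS)).
  move=> [t1 t2]; rewrite !inE /= => /andP [ha hf].
  set V := <<t2 ++ t1>>%VS.
  have hV : \dim V = r by rewrite dim_free // size_cat !size_tuple subnKC.
  rewrite hV eqxx /= (injdist_eq hU hV).
  have hc : (r - rho <= \dim (U :&: V))%N.
    have f1 : free t1 by apply: catr_free hf.
    rewrite -(size_tuple t1) -(dim_free f1); apply: dimvS.
    rewrite subv_cap span_all //= /V span_cat; exact: addvSr.
  have := dimv_sum_cap U V; rewrite hU hV; lia.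
move=> V; rewrite !inE => /andP [/eqP hV hd]; rewrite (injdist_eq hU hV) in hd.
set d := \dim (U :&: V).
have hdd : (r - rho <= d)%N by have := dimv_sum_cap U V; rewrite hU hV -/d; lia.
pose P1 := fun t1 : (r - rho).-tuple T => all (fun x => x \in (U :&: V)%VS) t1 && free (t1 ++ [::]).
pose R1 := fun (t1 : (r - rho).-tuple T) (t2 : rho.-tuple T) =>
   all (fun x => x \in V) t2 && free (t2 ++ t1).
have h2 : (q ^ ((r - rho) * (r - rho).-1) * q ^ (rho * r.-1) <=
           #|[set p | P1 p.1 && R1 p.1 p.2]|)%N.
  have hR : forall t1, P1 t1 -> (q ^ (rho * r.-1) <= #|[set t2 | R1 t1 t2]|)%N.
    move=> t1 /andP [_ hf1]; rewrite cats0 in hf1.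
    have := @lb_free V t1 rho hf1; rewrite size_tuple hV subnKC // leqnn => /(_ isT).
    by move/leq_trans; apply; apply: subset_leq_card; apply/subsetP => t2; rewrite !inE.
  apply: leq_trans (card_pairs_lb hR).
  rewrite leq_mul2r; apply/orP; right.
  have := @lb_free (U :&: V)%VS [::] (r - rho) (nil_free _); rewrite addn0 => /(_ hdd) h.
  apply: leq_trans h; rewrite leq_pexp2l ?(ltnW q_gt1) // leq_mul2l; apply/orP; right.
  by rewrite -!subn1 leq_sub2r.
rewrite expnD; apply: leq_trans h2 _; apply: subset_leq_card; apply/subsetP.
move=> [t1 t2]; rewrite !inE /= => /andP [/andP [ha1 hf1] /andP [ha2 hf2]].
have ha1' : all (fun x => x \in U) t1.
  by apply/allP => x /(allP ha1); rewrite memv_cap => /andP [].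
rewrite ha1' hf2 /=; apply/eqP; apply: span_eqV => //.
  rewrite all_cat ha2 /=; apply/allP => x /(allP ha1); rewrite memv_cap => /andP [] //.
by rewrite size_cat !size_tuple subnKC.
Qed.


Lemma ball_lb r rho (U : subsp F n) : U \in Er F n r -> (rho <= r)%N -> (r + rho <= n)%N ->
  (q ^ ((r - rho) * r.-1 + rho * n.-1)
     <= #|ball r rho U| * q ^ ((r - rho) * (r - rho) + rho * r))%N.
Proof.
rewrite inE => /eqP hU hrr hrn.
pose P1 := fun t1 : (r - rho).-tuple T => all (fun x => x \in U) t1 && free (t1 ++ [::]).
pose R1 := fun (t1 : (r - rho).-tuple T) (t2 : rho.-tuple T) =>
   all (fun x => x \in (fullv : {vspace T})) t2 && free (t2 ++ vbasis U).
pose A := [set p : (r - rho).-tuple T * rho.-tuple T | P1 p.1 && R1 p.1 p.2].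
have h1 : (q ^ ((r - rho) * r.-1 + rho * n.-1) <= #|A|)%N.
  have hR : forall t1, P1 t1 -> (q ^ (rho * n.-1) <= #|[set t2 | R1 t1 t2]|)%N.
    move=> t1 _.
    have hs : (rho + size (vbasis U) <= \dim (fullv : {vspace T}))%N.
      by rewrite size_tuple hU dimT addnC.
    have := @lb_free fullv (vbasis U) rho (basis_free (vbasisP U)) hs.
    by rewrite dimT.
  rewrite expnD; apply: leq_trans (card_pairs_lb hR).
  rewrite leq_mul2r; apply/orP; right.
  have := @lb_free U [::] (r - rho) (nil_free _); rewrite addn0 hU leq_subr => /(_ isT).
  by [].
have key : forall p, p \in A ->
    (r + rho <= \dim (U + <<p.2 ++ p.1>>))%N /\ (r - rho <= \dim (U :&: <<p.2 ++ p.1>>))%N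
    /\ (\dim <<p.2 ++ p.1>> <= r)%N.
  move=> [t1 t2]; rewrite !inE /= => /andP [/andP [ha1 hf1] /andP [_ hf2]].
  rewrite cats0 in hf1.
  split; last split.
  - have e : \dim <<t2 ++ vbasis U>> = (rho + r)%N by rewrite dim_free // size_cat !size_tuple hU.
    rewrite addnC -e; apply: dimvS.
    rewrite span_cat (span_basis (vbasisP U)) subv_add addvSl andbT.
    apply: subv_trans (addvSr U _); rewrite span_cat; exact: addvSl.
  - have e : \dim <<t1>> = (r - rho)%N by rewrite dim_free // size_tuple.
    apply: (leq_trans (eq_leq (esym e))); apply: dimvS.
    rewrite subv_cap span_all //= span_cat; exact: addvSr.
  - apply: leq_trans (dim_span _) _; rewrite size_cat !size_tuple subnKC //.
apply: leq_trans h1 _.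
apply: (@fiber_ub _ A (ball r rho U) (fun p => <<p.2 ++ p.1>>%VS)).
  move=> p hp; have [k1 [k2 k3]] := key p hp.
  set V := <<p.2 ++ p.1>>%VS in k1 k2 k3 *.
  have s := dimv_sum_cap U V; rewrite hU in s.
  have hV : (\dim V = r :> nat).
    move: k1 k2 k3 s hrr; move: (\dim V : nat) (\dim (U + V) : nat) (\dim (U :&: V) : nat) => a b c. clear. lia.
  rewrite !inE hV eqxx /= (injdist_eq hU hV).
  move: k1 k2 k3 s hrr; move: (\dim V : nat) (\dim (U + V) : nat) (\dim (U :&: V) : nat) => a b c. clear. lia.
move=> V hVb.
have [hne | [p0 hp0]] := set_0Vmem [set a in A | <<a.2 ++ a.1>>%VS == V].
  by rewrite hne cards0.
rewrite inE in hp0; case/andP: hp0 => hp0 /eqP e0.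
have [k1 [k2 k3]] := key p0 hp0; rewrite e0 in k1 k2 k3.
have s := dimv_sum_cap U V; rewrite hU in s.
have hd : (\dim (U :&: V) <= r - rho)%N.
  move: k1 k2 k3 s hrr; move: (\dim V : nat) (\dim (U + V) : nat) (\dim (U :&: V) : nat) => a b c. clear. lia.
apply: (@leq_trans #|[set p : (r - rho).-tuple T * rho.-tuple T |
             all (fun x => x \in (U :&: V)%VS) p.1 && all (fun x => x \in V) p.2]|).
  apply: subset_leq_card; apply/subsetP => -[t1 t2]; rewrite !inE /=.
  move=> /andP [/andP [/andP [ha1 _] _] /eqP <-]; apply/andP; split; apply/allP => x hx.
    rewrite memv_cap; apply/andP; split.
      exact: (allP ha1).
    by apply: memv_span; rewrite mem_cat hx orbT.
  by apply: memv_span; rewrite mem_cat hx.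
rewrite (card_prod (fun t : (r - rho).-tuple T => all (fun x => x \in (U :&: V)%VS) t)
   (fun t : rho.-tuple T => all (fun x => x \in V) t)) !card_allX.
have hV : (\dim V = r :> nat).
  move: k1 k2 k3 s hrr; move: (\dim V : nat) (\dim (U + V) : nat) (\dim (U :&: V) : nat) => a b c. clear. lia.
rewrite hV expnD leq_mul // leq_pexp2l ?(ltnW q_gt1) // leq_mul2l hd orbT //.
Qed.


Lemma injdistC (U V : subsp F n) : injdist U V = injdist V U.
Proof. by rewrite /injdist addvC minnC. Qed.

Lemma bigmin_le (I : finType) (P : pred I) (f : I -> nat) s i0 :
  P i0 -> (\big[minn/s]_(i | P i) f i <= f i0)%N.
Proof.
move=> Pi0; have : i0 \in index_enum I by rewrite mem_index_enum.
elim: (index_enum I) => [|j l IH] //; rewrite inE big_cons => /orP [/eqP <- | hl].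
  by rewrite Pi0 geq_minl.
case: ifP => _; last exact: IH.
by apply: leq_trans (geq_minr _ _) (IH hl).
Qed.

Lemma KC_ub r rho (C : {set subsp F n}) : covering_code r rho C -> (K_C F n r rho <= #|C|)%N.
Proof. by move=> h; apply: (@bigmin_le _ (fun C => covering_code r rho C)). Qed.

Lemma KC_lb r rho M : (0 < M)%N ->
  (forall U, U \in Er F n r -> #|ball r rho U| <= M)%N ->
  (#|Er F n r| <= K_C F n r rho * M)%N.
Proof.
move=> hM hb; rewrite /K_C.
apply: (big_ind (fun x => #|Er F n r| <= x * M)%N).
- by rewrite leq_pmulr.
- by move=> x y hx hy; rewrite /minn; case: ifP.
move=> C /and3P [hs _ /forallP hc].
pose phi U := odflt U [pick X in C | injdist U X <= rho]%N.
apply: (@fiber_ub _ (Er F n r) C phi).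
  move=> U hU; have /implyP /(_ hU) /existsP [X /andP [hX hd]] := hc U.
  rewrite /phi; case: pickP => [Y /andP [] //| /(_ X)]; by rewrite hX hd.
move=> X hX; apply: leq_trans (hb X (subsetP hs X hX)).
apply: subset_leq_card; apply/subsetP => U; rewrite !inE => /andP [hU /eqP hp].
rewrite hU injdistC /=; move: hp; rewrite /phi; case: pickP => [Y /andP [_ hd] <- //|].
move=> hn _; have hU' : U \in Er F n r by rewrite inE.
have /implyP /(_ hU') /existsP [Z /andP [hZ hd]] := hc U.
by have := hn Z; rewrite hZ hd.
Qed.


Definition cov rho (C : {set subsp F n}) := [set U | [exists X in C, injdist U X <= rho]%N].

Lemma card_cond (A : {set subsp F n}) (P : pred (subsp F n)) :
  #|A :&: [set x | P x]| = (\sum_(x in A) (P x : nat))%N.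
Proof.
rewrite -sum1_card [RHS]big_mkcond [LHS]big_mkcond /=.
apply: eq_bigr => x _; rewrite !inE; by case: (x \in A); case: (P x).
Qed.

Lemma avg r rho b (S : {set subsp F n}) : S \subset Er F n r ->
  (forall U, U \in Er F n r -> b <= #|ball r rho U|)%N -> (0 < #|Er F n r|)%N ->
  exists2 X, X \in Er F n r & (#|S| * b <= #|Er F n r| * #|S :&: ball r rho X|)%N.
Proof.
move=> hS hb hE.
pose f X := #|S :&: ball r rho X|.
have [X hX hmax] := eq_bigmax_cond f hE.
exists X => //.
have e1 : forall Y, Y \in Er F n r -> f Y = (\sum_(U in S) (injdist U Y <= rho)%N : nat)%N.
  move=> Y hY; rewrite /f -card_cond; apply: eq_card => U; rewrite !inE.
  case hU: (U \in S) => //=; rewrite injdistC.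
  by have := subsetP hS U hU; rewrite inE => ->.
have : (#|S| * b <= \sum_(Y in Er F n r) f Y)%N.
  rewrite (eq_bigr _ e1) exchange_big /= -sum_nat_const.
  apply: leq_sum => U hU; apply: leq_trans (hb U (subsetP hS U hU)) _.
  rewrite /ball -card_cond; apply: eq_leq; apply: eq_card => Y; rewrite !inE.
  by rewrite andbC.
move/leq_trans; apply.
apply: (@leq_trans (\sum_(Y in Er F n r) f X)).
  by apply: leq_sum => Y hY; rewrite -hmax; exact: (leq_bigmax_cond (F := f)).
by rewrite sum_nat_const.
Qed.


Lemma cov_add rho X (C : {set subsp F n}) U :
  (U \in cov rho (X |: C)) = (U \in cov rho C) || (injdist U X <= rho)%N.
Proof.
rewrite !inE; apply/existsP/orP => [[Y /andP [hY hd]] | [/existsP [Y /andP [hY hd]] | hd]].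
- move: hY; rewrite !inE => /orP [/eqP <- | hY]; [by right | left].
  by apply/existsP; exists Y; rewrite hY.
- by exists Y; rewrite !inE hY orbT.
- by exists X; rewrite !inE eqxx.
Qed.

Lemma halving r rho b j (S : {set subsp F n}) : (0 < b)%N ->
  (forall U, U \in Er F n r -> b <= #|ball r rho U|)%N ->
  S \subset Er F n r -> (#|S| < 2 ^ j.+1)%N ->
  exists C : {set subsp F n}, [/\ C \subset Er F n r,
    (#|C| <= (#|Er F n r| %/ b).+1)%N & (#|S :\: cov rho C| < 2 ^ j)%N].
Proof.
move=> hb0 hb hS hSj.
set N := #|Er F n r|.
have inner : forall i, exists C : {set subsp F n}, [/\ C \subset Er F n r, (#|C| <= i)%N &
   (#|S :\: cov rho C| < 2 ^ j)%N \/ (i * 2 ^ j * b <= N * (#|S| - #|S :\: cov rho C|))%N].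
  elim=> [|i [C [hC hCi hor]]].
    by exists set0; split; rewrite ?sub0set ?cards0 //; right; rewrite !mul0n.
  case: (ltnP #|S :\: cov rho C| (2 ^ j)) => hl.
    by exists C; split => //; [apply: leq_trans hCi _ | left].
  case: hor => [hl' | hr]; first by rewrite ltnNge hl in hl'.
  set S' := S :\: cov rho C in hl hr.
  have hS' : S' \subset Er F n r by apply: subset_trans hS; apply: subsetDl.
  have hN : (0 < N)%N.
    apply: leq_trans (subset_leq_card hS'); apply: leq_trans hl; exact: expn_gt0.
  have [X hX hav] := avg hS' hb hN.
  exists (X |: C); split.
  - by rewrite subUset sub1set hX hC.
  - by rewrite cardsU1 -add1n leq_add // leq_b1.
  right.
  have e : S :\: cov rho (X |: C) = S' :\: ball r rho X.
    apply/setP => U; have h := cov_add rho X C U; rewrite !inE in h; rewrite !inE h.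
    case hU: (U \in S) => /=; last by rewrite !andbF.
    have := subsetP hS U hU; rewrite inE => ->; rewrite injdistC /=.
    by rewrite negb_or !andbT andbC.
  rewrite e.
  have c1 := cardsID (ball r rho X) S'.
  have c2 : (#|S'| <= #|S|)%N by apply: subset_leq_card; apply: subsetDl.
  have c3 : (2 ^ j * b <= #|S'| * b)%N by rewrite leq_mul2r hl orbT.
  move: hr hav c3 c1 c2.
  move: (#|S|) (#|S'|) (#|S' :&: ball r rho X|) (#|S' :\: ball r rho X|) (2 ^ j) => s s' a d t.
  move=> hr hav c3 c1 c2.
  have e1 : (s - d = (s - s') + a)%N by lia.
  rewrite e1 mulnDr mulSn mulnDl.
  rewrite addnC; apply: leq_add => //; apply: leq_trans c3 _; rewrite -c1 in hav; rewrite -c1. exact: hav.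
have [C [hC hCm hor]] := inner (N %/ b).+1.
exists C; split => //.
case: hor => // hr.
have hc := ltn_ceil N hb0.
move: hr hc; set m := (N %/ b).+1; set S' := S :\: cov rho C.
have c2 : (#|S'| <= #|S|)%N by apply: subset_leq_card; apply: subsetDl.
move: hSj c2; rewrite expnS.
have ht : (0 < 2 ^ j)%N by rewrite expn_gt0.
move: ht; move: (#|S|) (#|S'|) (2 ^ j) m => s s' t m' ht hSj c2 hr hc.
have h1 : (N * t < N * (s - s'))%N.
  apply: (@leq_trans (m' * b * t)); first by rewrite ltn_pmul2r.
  by rewrite mulnAC.
have h2 : (t < s - s')%N by move: h1; case: (N) => [|N'] //; rewrite ltn_pmul2l.
lia.
Qed.


Lemma cover_all r rho b j (S : {set subsp F n}) : (0 < b)%N ->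
  (forall U, U \in Er F n r -> b <= #|ball r rho U|)%N ->
  S \subset Er F n r -> (#|S| < 2 ^ j)%N ->
  exists C : {set subsp F n}, [/\ C \subset Er F n r,
    (#|C| <= (#|Er F n r| %/ b).+1 * j)%N & S \subset cov rho C].
Proof.
move=> hb0 hb; elim: j S => [|j IH] S hS hSj.
  exists set0; split; rewrite ?sub0set ?cards0 //.
  by move: hSj; rewrite expn0 ltnS leqn0 cards_eq0 => /eqP ->; rewrite sub0set.
have [C1 [h1 h2 h3]] := halving hb0 hb hS hSj.
have [C2 [h4 h5 h6]] := IH (S :\: cov rho C1) (subset_trans (subsetDl _ _) hS) h3.
exists (C1 :|: C2); split.
- by rewrite subUset h1 h4.
- by apply: leq_trans (leq_card_setU _ _) _; rewrite mulnS leq_add.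
apply/subsetP => U hU.
have covS : forall D D' : {set subsp F n}, D \subset D' -> cov rho D \subset cov rho D'.
  move=> D D' hD; apply/subsetP => V; rewrite !inE => /existsP [Y /andP [hY hd]].
  by apply/existsP; exists Y; rewrite hd (subsetP hD).
case hc: (U \in cov rho C1).
  by apply: (subsetP (covS _ _ (subsetUl C1 C2))).
apply: (subsetP (covS _ _ (subsetUr C1 C2))); apply: (subsetP h6).
by rewrite inE hc hU.
Qed.

Lemma KC_greedy r rho b k : (0 < b)%N ->
  (forall U, U \in Er F n r -> b <= #|ball r rho U|)%N ->
  (#|Er F n r| < 2 ^ k)%N ->
  (K_C F n r rho <= (#|Er F n r| %/ b).+1 * k)%N.
Proof.
move=> hb0 hb hk.
have [hE | [U0 hU0]] := set_0Vmem (Er F n r).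
  rewrite /K_C.
  apply: (big_ind (fun x => x <= (#|Er F n r| %/ b).+1 * k)%N).
  - by rewrite hE cards0.
  - by move=> x y hx hy; rewrite /minn; case: ifP.
  move=> C /and3P [hs hC _]; move: hC; rewrite hE subset0 in hs.
  by rewrite (eqP hs) cards0.
have [C [h1 h2 h3]] := cover_all hb0 hb (subxx _) hk.
apply: leq_trans h2; apply: KC_ub.
rewrite /covering_code h1 /=; apply/andP; split.
  have := subsetP h3 U0 hU0; rewrite inE => /existsP [X /andP [hX _]].
  by rewrite card_gt0; apply/set0Pn; exists X.
apply/forallP => U; apply/implyP => hU; have := subsetP h3 U hU; by rewrite inE.
Qed.


Lemma mulpred x y : (x * y <= x * y.-1 + x)%N.
Proof. by case: y => [|y] /=; rewrite ?muln0 ?mulnS; lia. Qed.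

Lemma leq_expb a c e : (a <= c)%N -> (a ^ e <= c ^ e)%N.
Proof. by move=> h; elim: e => // e IH; rewrite !expnS leq_mul. Qed.

Lemma pow4 m : (m * m + m + 1 <= 4 ^ m)%N.
Proof. elim: m => [|m IH] //; rewrite expnS; nia. Qed.

Lemma nat_summary r rho : (rho <= r)%N -> (r + rho <= n)%N ->
  let N := #|Er F n r| in let K := K_C F n r rho in let a := (r - rho)%N in
  exists M b : nat, [/\ (0 < N)%N, (0 < b)%N, (0 < M)%N, (0 < K)%N &
   [/\ (q ^ (r * n) <= N * q ^ (r * r + r))%N,
       (N * q ^ (r * r) <= q ^ (n * r + r))%N,
       (M * q ^ (a * a + rho * r) <= q ^ (a * r + rho * n + r))%N,
       (q ^ (a * r + rho * n) <= b * q ^ (a * a + rho * r + r))%N &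
       [/\ (N <= K * M)%N & (K * b <= N * q ^ (n.*2 + 2))%N]]].
Proof.
move=> hr hn N K a.
have q1 := q_gt1; have q0 : (0 < q)%N by apply: ltnW.
have hrn : (r <= n)%N by apply: leq_trans hn; exact: leq_addr.
have A1 : (q ^ (r * n) <= N * q ^ (r * r + r))%N.
  apply: leq_trans (_ : q ^ (r * n.-1 + r) <= _)%N.
    by rewrite leq_pexp2l //; have := mulpred r n; lia.
  by rewrite !expnD mulnA leq_mul2r (Er_lb hrn) orbT.
have A2 : (N * q ^ (r * r) <= q ^ (n * r + r))%N.
  apply: leq_trans (_ : N * q ^ (r * r.-1 + r) <= _)%N.
    rewrite leq_mul2l; apply/orP; right; rewrite leq_pexp2l //.
    by have := mulpred r r; lia.
  by rewrite !expnD mulnA leq_mul2r Er_ub orbT.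
have hN : (0 < N)%N.
  rewrite lt0n; apply/negP => /eqP h0; move: A1; rewrite h0 mul0n leqn0.
  by have := expn_gt0 q (r * n); rewrite q0 /= => h1 /eqP h2; rewrite h2 in h1.
have [U0 hU0] : exists U0, U0 \in Er F n r.
  have /set0Pn [U0 h] : Er F n r != set0 by rewrite -card_gt0.
  by exists U0.
pose fb U := #|ball r rho U|.
pose b := fb [arg min_(U < U0 in Er F n r) fb U].
pose M := fb [arg max_(U > U0 in Er F n r) fb U].
have hb : forall U, U \in Er F n r -> (b <= fb U)%N.
  by rewrite /b; case: arg_minnP => // V hV hmin U hU; apply: hmin.
have hM : forall U, U \in Er F n r -> (fb U <= M)%N.
  by rewrite /M; case: arg_maxnP => // V hV hmax U hU; apply: hmax.
have A3 : (M * q ^ (a * a + rho * r) <= q ^ (a * r + rho * n + r))%N.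
  rewrite /M; case: arg_maxnP => // V hV _.
  have := ball_ub hV hr; rewrite -/a => h.
  apply: leq_trans (_ : #|ball r rho V| * q ^ (a * a.-1 + rho * r.-1 + r) <= _)%N.
    rewrite leq_mul2l; apply/orP; right; rewrite leq_pexp2l //.
    have := mulpred a a; have := mulpred rho r; rewrite /a; lia.
  rewrite (expnD q (a * a.-1 + rho * r.-1) r) (expnD q (a * r + rho * n) r) mulnA.
  by rewrite leq_mul2r h orbT.
have A4 : (q ^ (a * r + rho * n) <= b * q ^ (a * a + rho * r + r))%N.
  rewrite /b; case: arg_minnP => // V hV _.
  have := ball_lb hV hr hn; rewrite -/a => h.
  apply: leq_trans (_ : q ^ (a * r.-1 + rho * n.-1 + r) <= _)%N.
    rewrite leq_pexp2l //.
    have := mulpred a r; have := mulpred rho n; rewrite /a; lia.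
  rewrite (expnD q (a * r.-1 + rho * n.-1) r) (expnD q (a * a + rho * r) r) mulnA.
  by rewrite leq_mul2r h orbT.
have hb0 : (0 < b)%N.
  rewrite lt0n; apply/negP => /eqP h0; move: A4; rewrite h0 mul0n leqn0.
  by have := expn_gt0 q (a * r + rho * n); rewrite q0 /= => h1 /eqP h2; rewrite h2 in h1.
have hbM : (b <= M)%N by apply: leq_trans (hb U0 hU0) (hM U0 hU0).
have hbN : (b <= N)%N.
  apply: leq_trans (hb U0 hU0) _; apply: subset_leq_card; apply/subsetP => V.
  by rewrite inE => /andP [].
have hK1 : (N <= K * M)%N.
  by apply: KC_lb; [apply: leq_trans hbM | move=> U hU; exact: hM].
pose k := (q * (n * n + n)).+1.
have hk : (N < 2 ^ k)%N.
  apply: (@leq_ltn_trans (q ^ (n * n + n))).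
    apply: (@leq_trans (q ^ (n * r + r))).
      apply: leq_trans A2; rewrite leq_pmulr // expn_gt0 q0 //.
    by rewrite leq_pexp2l //; nia.
  rewrite /k expnS mulnC expnM; apply: (@leq_ltn_trans ((2 ^ q) ^ (n * n + n))).
    by apply: leq_expb; apply: ltnW; apply: ltn_expl.
  by rewrite -[X in (X < _)%N]muln1 ltn_pmul2l // expn_gt0 expn_gt0.
have hK2 := KC_greedy hb0 hb hk.
have hk2 : (k <= q ^ (n.*2 + 1))%N.
  rewrite /k expnD expn1 mulnC.
  apply: (@leq_trans (q * (n * n + n + 1))).
    by rewrite mulnDr muln1 -addn1; lia.
  rewrite [X in (_ <= X)%N]mulnC leq_mul2l; apply/orP; right; apply: leq_trans (pow4 n) _.
  rewrite -muln2 mulnC expnM; apply: leq_expb.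
  by rewrite (_ : 4 = 2 ^ 2)%N // leq_expb.
exists M, b; split => //.
- exact: leq_trans hbM.
- rewrite lt0n; apply/negP => /eqP h0; move: hK1; rewrite h0 mul0n leqn0 => /eqP h.
  by rewrite h in hN.
split => //; split => //.
apply: (@leq_trans ((N %/ b).+1 * k * b)); first by rewrite leq_mul2r hK2 orbT.
rewrite mulnAC; apply: (@leq_trans ((N + N) * k)).
  by rewrite leq_mul2r; apply/orP; right; rewrite mulSn addnC leq_add // leq_divM.
rewrite addnn -muln2 -mulnA leq_mul2l; apply/orP; right.
rewrite (_ : n.*2 + 2 = (n.*2 + 1) + 1)%N; last by rewrite -addnA.
rewrite expnD expn1 mulnC; apply: leq_mul => //.
Qed.

End VS.

From mathcomp Require Import all_classical all_reals all_analysis.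
From mathcomp Require Import ring lra.
Import numFieldNormedType.Exports.
Section Real.
Variables (R : realType) (F : finFieldType).
Local Open Scope ring_scope.
Local Notation q := (#|F|%:R : R).
Local Notation lq := (logq q).

Lemma lnq_gt0 : 0 < ln q.
Proof. by apply: ln_gt0; rewrite ltr1n; exact: q_gt1. Qed.

Lemma lq_nat_ineq (x y e f : nat) : (0 < x)%N -> (0 < y)%N ->
  (x * #|F| ^ e <= y * #|F| ^ f)%N -> lq x%:R + e%:R <= lq y%:R + f%:R.
Proof.
move=> hx hy h.
have q0 : (0 < #|F|)%N by apply: ltnW; exact: q_gt1.
have hL := lnq_gt0.
have h1 : ln (x * #|F| ^ e)%:R <= ln (y * #|F| ^ f)%:R :> R.
  rewrite ler_ln ?posrE ?ltr0n ?muln_gt0 ?expn_gt0 ?hx ?hy ?q0 //.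
  by rewrite ler_nat.
have hq : 0 < q by rewrite ltr0n.
rewrite !natrM !natrX !lnM ?posrE ?ltr0n ?exprn_gt0 ?expn_gt0 ?q0 // in h1.
rewrite !(lnXn _ hq) in h1.
rewrite /logq.
have e1 : ln x%:R / ln q + e%:R = (ln x%:R + ln q *+ e) / ln q :> R.
  by rewrite -mulr_natr; field; rewrite gt_eqF.
have e2 : ln y%:R / ln q + f%:R = (ln y%:R + ln q *+ f) / ln q :> R.
  by rewrite -mulr_natr; field; rewrite gt_eqF.
by rewrite e1 e2 ler_pM2r // invr_gt0.
Qed.


Lemma lq_mul (x y : nat) : (0 < x)%N -> (0 < y)%N -> lq (x * y)%:R = lq x%:R + lq y%:R.
Proof.
move=> hx hy; rewrite /logq natrM lnM ?posrE ?ltr0n // mulrDl //.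
Qed.

Lemma lq1 : lq 1 = 0.
Proof. by rewrite /logq ln1 mul0r. Qed.

Lemma lqK_bounds n r rho : (rho <= r)%N -> (r + rho <= n)%N ->
  r%:R * (n%:R - r%:R) - rho%:R * (n%:R - rho%:R) - 2 * r%:R <= lq (K_C F n r rho)%:R
  /\ lq (K_C F n r rho)%:R <= r%:R * (n%:R - r%:R) - rho%:R * (n%:R - rho%:R) + 2 * r%:R + 2 * n%:R + 2.
Proof.
move=> hr hn.
have [M [b [hN hb hM hK [A1 A2 A3 A4 [A5 A6]]]]] := @nat_summary F n r rho hr hn.
set N := #|Er F n r| in hN A1 A2 A5 A6.
set K := K_C F n r rho in hK A5 A6 *.
set a := (r - rho)%N in A3 A4.
have B1 := @lq_nat_ineq 1 N (r * n) (r * r + r) isT hN ltac:(by rewrite mul1n).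
have B2 := @lq_nat_ineq N 1 (r * r) (n * r + r) hN isT ltac:(by rewrite mul1n).
have B3 := @lq_nat_ineq M 1 (a * a + rho * r) (a * r + rho * n + r) hM isT ltac:(by rewrite mul1n).
have B4 := @lq_nat_ineq 1 b (a * r + rho * n) (a * a + rho * r + r) isT hb ltac:(by rewrite mul1n).
have B5 := @lq_nat_ineq N (K * M) 0 0 hN ltac:(by rewrite muln_gt0 hK hM) ltac:(by rewrite !expn0 !muln1).
have B6 := @lq_nat_ineq (K * b) N 0 (n.*2 + 2) ltac:(by rewrite muln_gt0 hK hb) hN ltac:(by rewrite expn0 muln1).
rewrite !lq_mul // lq1 in B1 B2 B3 B4 B5 B6.
rewrite /a in B3 B4.
rewrite -!mul2n !natrD !natrM !natrB // in B1 B2 B3 B4 B5 B6.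
split; nra.
Qed.


Lemma q_gt1R : 1 < q.
Proof. by rewrite ltr1n; exact: q_gt1. Qed.

Lemma lq_le x y : 0 < x -> x <= y -> lq x <= lq y.
Proof.
move=> hx hxy; rewrite /logq ler_pM2r ?invr_gt0 ?lnq_gt0 // ler_ln ?posrE //.
exact: lt_le_trans hxy.
Qed.

Lemma lq_exp k : lq (q ^+ k) = k%:R.
Proof.
rewrite /logq lnXn; last by apply: lt_trans q_gt1R.
have := lnq_gt0; move=> hL; rewrite -mulr_natr; field; by rewrite ?mul1r gt_eqF.
Qed.

Lemma aux_ineq (X Y Z Q : R) : Q * Z <= Y -> 1 <= X -> 0 < Z -> 2 <= Q ->
  X * Y - Z <= Q * X * (Y - Z).
Proof.
move=> hY hX hZ hQ.
have a1 : 0 <= Q - 1 by lra.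
have a2 : 0 <= X by lra.
have a3 : 0 <= Y - Q * Z by lra.
have a4 : 0 <= Q by lra.
have a5 : 0 <= Z by lra.
have a6 : 0 <= Q - 2 by lra.
have h1 : 0 <= (Q - 1) * X * (Y - Q * Z) by rewrite !mulr_ge0.
have h2 : 0 <= Q * X * Z * (Q - 2) by rewrite !mulr_ge0.
have e : Q * X * (Y - Z) - (X * Y - Z) = (Q - 1) * X * (Y - Q * Z) + Q * X * Z * (Q - 2) + Z.
  by ring.
lra.
Qed.

Lemma gauss_bounds n r : (r <= n)%N ->
  (q ^+ (n - r)) ^+ r <= gauss_binom q n r <= (q ^+ (n - r).+1) ^+ r.
Proof.
move=> hrn; set m := (n - r)%N.
have hn : n = (m + r)%N by rewrite /m subnK.
have hq1 := q_gt1R; have hq0 : 0 < q by apply: lt_trans hq1.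
have hpow : forall a c, (a <= c)%N -> q ^+ a <= q ^+ c.
  by move=> a c hac; rewrite ler_eXn2l.
have key : forall i : 'I_r, 0 <= q ^+ m <= (q ^+ n - q ^+ i) / (q ^+ r - q ^+ i)
                       /\ (q ^+ n - q ^+ i) / (q ^+ r - q ^+ i) <= q ^+ m.+1.
  move=> i; have hi := ltn_ord i.
  have hd : 0 < q ^+ r - q ^+ i by rewrite subr_gt0 ltr_eXn2l.
  have hqi : 0 < q ^+ i by apply: exprn_gt0.
  have hqm : 1 <= q ^+ m by apply: exprn_ege1; apply: ltW.
  rewrite hn exprD; split; first (apply/andP; split; first by apply: exprn_ge0; apply: ltW).
    rewrite ler_pdivlMr //; nra.
  rewrite ler_pdivrMr // exprS.
  have hq2 : 2 <= q by rewrite ler_nat; exact: q_gt1.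
  have hY : q * q ^+ i <= q ^+ r by rewrite -exprS ler_eXn2l.
  exact: aux_ineq.

rewrite /gauss_binom; apply/andP; split.
  have e : (q ^+ m) ^+ r = \prod_(i < r) q ^+ m by rewrite prodr_const card_ord.
  rewrite e; apply: ler_prod => i _.
  by case: (key i).
have e : (q ^+ m.+1) ^+ r = \prod_(i < r) q ^+ m.+1 by rewrite prodr_const card_ord.
rewrite e; apply: ler_prod => i _.
case: (key i) => /andP [h1 h2] h3; apply/andP; split => //.
exact: le_trans h1 h2.
Qed.


Lemma lqG_bounds n r : (r <= n)%N ->
  r%:R * (n%:R - r%:R) <= lq (gauss_binom q n r) <= r%:R * (n%:R - r%:R) + r%:R.
Proof.
move=> hrn; have /andP [h1 h2] := gauss_bounds hrn.
have hq0 : 0 < q by apply: lt_trans q_gt1R.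
have p1 : 0 < (q ^+ (n - r)) ^+ r by rewrite !exprn_gt0.
have l1 := lq_le p1 h1.
have l2 := lq_le (lt_le_trans p1 h1) h2.
rewrite -!exprM !lq_exp in l1 l2.
rewrite natrM natrB // in l1; rewrite natrM -addn1 natrD natrB // in l2.
apply/andP; split; nra.
Qed.

Local Open Scope classical_set_scope.
Lemma cvg_rate (u : R ^nat) (l c : R) :
  (forall n, (0 < n)%N -> `|u n - l| <= c / n%:R) -> u @ \oo --> l.
Proof.
move=> h; apply/cvgrPdist_le => e e0.
exists (Num.truncn (c / e)).+1 => // n /= hn.
have n0 : (0 < n)%N by apply: leq_trans hn.
rewrite distrC; apply: le_trans (h n n0) _.
have hn' : c / e < n%:R.
  apply: lt_le_trans (truncnS_gt _) _; by rewrite ler_nat.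
rewrite ler_pdivrMr ?ltr0n //.
have := hn'; rewrite ltr_pdivrMr //; move=> /ltW; by rewrite mulrC.
Qed.


Lemma div_bound (A B c N : R) : 0 < N -> -(c * N) <= A - N ^+ 2 * B <= c * N ->
  `|A / N ^+ 2 - B| <= c / N.
Proof.
move=> hN /andP [h1 h2].
have e : A / N ^+ 2 - B = (A - N ^+ 2 * B) / N ^+ 2 by field; rewrite gt_eqF.
have e2 : c / N = (c * N) / N ^+ 2 by field; rewrite gt_eqF.
rewrite e e2 normrM (ger0_norm (x := (N ^+ 2)^-1)); last by rewrite invr_ge0 exprn_ge0 // ltW.
rewrite ler_pM2r ?invr_gt0 ?exprn_gt0 //.
by rewrite ler_norml h1 h2.
Qed.

Lemma quad_err (a N x : R) : 0 <= N -> 0 <= a -> a <= 1 / 2 -> 0 <= x -> x <= a * N -> a * N < x + 1 ->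
  - N <= x * (N - x) - N ^+ 2 * (a * (1 - a)) <= 0.
Proof.
move=> hN a0 a2 x0 h1 h2.
set d := a * N - x; set e := N - a * N - x.
have d0 : 0 <= d by rewrite /d; lra.
have d1 : d <= 1 by rewrite /d; lra.
have aN : a * N <= N / 2 by nra.
have e0 : 0 <= e by rewrite /e; lra.
have e1 : e <= N by rewrite /e; lra.
have p0 : 0 <= d * e by apply: mulr_ge0.
have p1 : d * e <= N.
  by apply: (@le_trans _ _ (1 * e)); [rewrite ler_wpM2r | rewrite mul1r].
have id : x * (N - x) - N ^+ 2 * (a * (1 - a)) = - (d * e) by rewrite /d /e; ring.
rewrite id; apply/andP; split; lra.
Qed.


Lemma per_n (r' rho' : R) n : 0 <= rho' -> rho' <= r' -> r' <= 1 / 2 -> 0 < r' -> (0 < n)%N ->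
  `|lq (K_C F n (Num.truncn (r' * n%:R)) (Num.truncn (rho' * n%:R)))%:R / n%:R ^+ 2
      - (r' * (1 - r') - rho' * (1 - rho'))| <= 10 / n%:R
  /\ `|lq (gauss_binom q n (Num.truncn (r' * n%:R))) / n%:R ^+ 2 - r' * (1 - r')| <= 3 / n%:R.
Proof.
move=> p0 pr r2 r0 n0.
set r := Num.truncn (r' * n%:R); set p := Num.truncn (rho' * n%:R).
have N1 : 1 <= n%:R :> R by rewrite ler1n.
have N0 : 0 < n%:R :> R by rewrite ltr0n.
have hrn0 : 0 <= r' * n%:R by rewrite mulr_ge0 // ltW.
have hpn0 : 0 <= rho' * n%:R by rewrite mulr_ge0 // ltW.
have /andP [hr1 hr2] := truncn_itv hrn0; rewrite -/r in hr1 hr2.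
have /andP [hp1 hp2] := truncn_itv hpn0; rewrite -/p in hp1 hp2.
rewrite -natr1 in hr2; rewrite -natr1 in hp2.
have hpr : (p <= r)%N by apply: le_truncn; rewrite ler_pM2r.
have hrp : (r + p <= n)%N.
  rewrite -(ler_nat R) natrD.
  have : r' * n%:R <= n%:R / 2 by nra.
  have : p%:R <= r%:R :> R by rewrite ler_nat.
  lra.
have hrn : (r <= n)%N by apply: leq_trans hrp; exact: leq_addr.
have [k1 k2] := lqK_bounds hpr hrp.
have /andP [g1 g2] := lqG_bounds hrn.
have /andP [qr1 qr2] := @quad_err r' n%:R r%:R (ltW N0) (ltW r0) r2 (ler0n _ _) hr1 hr2.
have /andP [qp1 qp2] := @quad_err rho' n%:R p%:R (ltW N0) p0 (le_trans pr r2) (ler0n _ _) hp1 hp2.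
have rN : r%:R <= n%:R :> R by rewrite ler_nat.
split; apply: div_bound => //; apply/andP; split.
all: lra.
Qed.

End Real.

Unset Implicit Arguments.
Local Open Scope ring_scope.
Local Open Scope classical_set_scope.

Theorem proposition11 (R : realType) (F : finFieldType) (r' rho' : R) :
  0 <= rho' -> rho' <= r' -> r' <= 1 / 2 -> 0 < r' ->
  kC F r' rho' = (1 - (rho' * (1 - rho')) / (r' * (1 - r')))%:E.
Proof.
move=> h1 h2 h3 h4.
set q : R := #|F|%:R.
set X := r' * (1 - r') - rho' * (1 - rho'); set Y := r' * (1 - r').
pose u (n : nat) := logq q (K_C F n (Num.truncn (r' * n%:R)) (Num.truncn (rho' * n%:R)))%:R / n%:R ^+ 2.
pose v (n : nat) := logq q (gauss_binom q n (Num.truncn (r' * n%:R))) / n%:R ^+ 2.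
have hu : u @ \oo --> X.
  by apply: (@cvg_rate R u X 10) => n n0; case: (per_n F h1 h2 h3 h4 n0).
have hv : v @ \oo --> Y.
  by apply: (@cvg_rate R v Y 3) => n n0; case: (per_n F h1 h2 h3 h4 n0).
have hY : Y != 0.
  rewrite /Y mulf_neq0 // ?gt_eqF //; lra.
have huv := cvgM hu (cvgV hY hv).
have e : forall n, kC_seq F r' rho' n = u n * (v n)^-1 :> R.
  move=> n; rewrite /kC_seq /u /v /= -/q.
  case: n => [|n].
    rewrite !expr0n /= !invr0 !mulr0 /gauss_binom truncn0.
    by rewrite big_ord0 /logq ln1 !mul0r invr0 mulr0.
  have hN : (n.+1%:R ^+ 2 : R) != 0 by rewrite expf_neq0 // pnatr_eq0.
  by rewrite [in RHS]invf_div [in RHS]mulrA [in RHS]divfK.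
have hk : (fun n => (kC_seq F r' rho' n)%:E) @ \oo --> (X * Y^-1)%:E.
  apply: cvg_EFin; first exact: nearW.
  have -> : fine \o (fun n => (kC_seq F r' rho' n)%:E) = (fun n => u n * (v n)^-1).
    by apply/funext => n /=; rewrite e.
  exact: huv.
rewrite /kC; have [-> _] := cvg_limn_einf_sup hk.
congr (_%:E); rewrite /X /Y; field.
by rewrite (gt_eqF h4) andbT gt_eqF //; lra.
Qed.
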